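(* Let $\theta\in(0,\pi)$ and let $C$ be the domain $C=\mathbb{C}\setminus\bigcup_{n\in\mathbb{Z}}\{n+iy:|y|\ge b_n\}$, where $b_0=1$ and $b_n=|n|\tan(\theta/2)$ for $n\in\mathbb{Z}\setminus\{0\}$. For $t>1$, let $J_t$ be the connected component of $C\cap\{|z|=t\}$ containing the point $t$, and define $\Theta(t)$ by $t\Theta(t)=l(J_t)$, where $l(J_t)$ is the length of the arc $J_t$. Then $\lim_{t\to+\infty}\Theta(t)=\theta$. *)

(* Defs.v *)
From HB Require Import structures.
From mathcomp Require Import all_boot all_order all_algebra.
From mathcomp Require Import all_classical all_reals all_analysis.
Set Implicit Arguments. Unset Strict Implicit. Unset Printing Implicit Defensive.
Import Order.TTheory GRing.Theory Num.Theory.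
Import numFieldNormedType.Exports.
Local Open Scope classical_set_scope.
Local Open Scope ring_scope.

Section Defs.
Variable R : realType.

Definition slit_height (theta : R) (n : int) : R :=
  if n == 0 then 1 else (`|n|%:~R) * tan (theta / 2).

Definition slit_domain (theta : R) : set (R * R) :=
  [set p | forall n : int, ~ (p.1 = n%:~R /\ slit_height theta n <= `|p.2|)].

Definition circle (t : R) : set (R * R) :=
  [set p | p.1 ^+ 2 + p.2 ^+ 2 = t ^+ 2].

Definition J (theta t : R) : set (R * R) :=
  connected_component (slit_domain theta `&` circle t) (t, 0).

Definition arc_length (t : R) (A : set (R * R)) : \bar R :=
  let angles := [set phi : R | (- pi < phi <= pi)%R /\
                                A (t * cos phi, t * sin phi)%R] in
  (t%:E * (@lebesgue_measure R) angles)%E.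

Definition Theta (theta t : R) : \bar R :=
  ((t^-1)%:E * arc_length t (J theta t))%E.

End Defs.

(* Main.v *)
Require Import Defs.
From HB Require Import structures.
From mathcomp Require Import all_boot all_order all_algebra.
From mathcomp Require Import all_classical all_reals all_analysis.
Import Order.TTheory GRing.Theory Num.Theory.
Import numFieldNormedType.Exports.
Local Open Scope classical_set_scope.
Local Open Scope ring_scope.
Lemma fst_cont (R : realType) : continuous (fun p : R * R => p.1).
Proof. move=> p; exact: cvg_fst. Qed.

Lemma comp_bound (R : realType) (S : set (R * R)) (x0 : R * R) (n : R) :
  (forall p, S p -> p.1 != n) -> n < x0.1 ->
  connected_component S x0 `<=` [set p | n < p.1].
Proof.
move=> Sn nx y [C [Cx CS cC] Cy].
have eqB : C `&` [set p | n < p.1] = C.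
  apply: cC.
  - by exists x0.
  - exists [set p | n < p.1] => //.
    apply: (@open_comp _ _ (fun p : R * R => p.1) [set x | n < x]).
      by move=> p _; apply: fst_cont.
    exact: open_gt.
  - exists [set p | n <= p.1].
      apply: (@preimage_closed _ _ (fun p : R * R => p.1) [set x | n <= x]).
        by move=> p _; apply: fst_cont.
      exact: closed_ge.
    apply/seteqP; split=> p [Cp]; rewrite /= => h; split => //.
      by rewrite ltW.
    by rewrite lt_neqAle h andbT eq_sym Sn //; apply: CS.
by have := Cy; rewrite -eqB => -[].
Qed.

Lemma arc_cont (R : realType) (t : R) :
  continuous (fun phi : R => (t * cos phi, t * sin phi)).
Proof.
move=> phi.
have h1 : (t * cos x) @[x --> phi] --> t * cos phi.
  by apply: cvgMr; apply: continuous_cos.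
have h2 : (t * sin x) @[x --> phi] --> t * sin phi.
  by apply: cvgMr; apply: continuous_sin.
exact: (cvg_pair h1 h2).
Qed.

Lemma arc_connected (R : realType) (t : R) (i : interval R) :
  connected [set (t * cos phi, t * sin phi) | phi in [set` i]].
Proof.
apply: connected_continuous_connected.
  by apply/connected_intervalP; apply: interval_is_interval.
by apply: continuous_subspaceT; apply: arc_cont.
Qed.
From mathcomp Require Import lra.
Lemma tan_lt (R : realType) (h psi : R) : 0 < h < pi / 2 -> - h < psi < h ->
  `|tan psi| < tan h.
Proof.
move=> /andP[h0 hpi] /andP[l r].
have pi0 := @pi_gt0 R.
have I : forall x : R, - h <= x <= h -> x \in `]- (pi / 2), pi / 2[.
  by move=> x /andP[a b]; rewrite in_itv /=; apply/andP; split; lra.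
rewrite ltr_norml; apply/andP; split.
  rewrite -tanN ltr_tan ?I //; apply/andP; split; lra.
rewrite ltr_tan ?I //; apply/andP; split; lra.
Qed.

Lemma arc_in_J (R : realType) (theta t a : R) :
  0 < a ->
  (forall psi, - a < psi < a -> slit_domain theta (t * cos psi, t * sin psi)) ->
  forall phi, - a < phi < a -> J theta t (t * cos phi, t * sin phi).
Proof.
move=> a0 hS phi hphi.
exists [set (t * cos psi, t * sin psi) | psi in [set` `]- a, a[]]; last first.
  by exists phi => //; rewrite /= in_itv.
split.
- exists 0; first by rewrite /= in_itv /=; apply/andP; split; lra.
  by rewrite cos0 sin0 mulr1 mulr0.
- move=> _ [psi hpsi <-]; split.
    by apply: hS; rewrite /= in_itv in hpsi.
  by rewrite /circle /= !exprMn -mulrDr cos2Dsin2 mulr1.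
- exact: arc_connected.
Qed.

Lemma lower_slit (R : realType) (theta t psi : R) :
  0 < theta < pi -> 0 < t -> - (theta / 2) < psi < theta / 2 ->
  slit_domain theta (t * cos psi, t * sin psi).
Proof.
move=> /andP[th0 thpi] t0 /andP[l r] n /= [e hb].
have pi0 := @pi_gt0 R.
have cpos : 0 < cos psi by apply: cos_gt0_pihalf; apply/andP; split; lra.
have kpos : 0 < t * cos psi by apply: mulr_gt0.
have n0 : n != 0.
  by apply/eqP => n0; move: e; rewrite n0 => e; move: kpos; rewrite e; lra.
have htl : `|tan psi| < tan (theta / 2).
  by apply: tan_lt; apply/andP; split; lra.
move: hb; rewrite /slit_height (negbTE n0) intr_norm -e.
have -> : t * sin psi = (t * cos psi) * tan psi.
  by rewrite /tan -mulrA [cos psi * _]mulrC divfK // gt_eqF.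
rewrite [`|_ * tan psi|]normrM (gtr0_norm kpos) => hb.
have := ler_pM2l kpos; move=> /(_ (tan (theta / 2)) `|tan psi|).
by rewrite hb => /esym; rewrite leNgt htl.
Qed.

Lemma upper_slit (R : realType) (theta t : R) :
  0 < theta < pi -> 0 < t -> 1 <= t * cos (theta / 2) ->
  forall p, (slit_domain theta `&` circle t) p ->
    p.1 != (Num.floor (t * cos (theta / 2)))%:~R.
Proof.
move=> /andP[th0 thpi] t0 h1 p [Sp Cp]; apply/eqP => e.
set n := Num.floor (t * cos (theta / 2)) in e.
apply: (Sp n); split => //.
have pi0 := @pi_gt0 R.
have cpos : 0 < cos (theta / 2) by apply: cos_gt0_pihalf; apply/andP; split; lra.
have spos : 0 < sin (theta / 2) by apply: sin_gt0_pihalf; apply/andP; split; lra.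
have n0 : 0 < n by rewrite floor_gt0.
have nle : n%:~R <= t * cos (theta / 2) by apply: floor_le.
have Nge : (0 : R) <= n%:~R by rewrite ler0z ltW.
rewrite /slit_height gt_eqF // intr_norm ger0_norm // /tan mulrA.
rewrite ler_pdivrMr //.
have sc := cos2Dsin2 (theta / 2).
have A0 : 0 <= `|p.2| by [].
have A2 : `|p.2| ^+ 2 = p.2 ^+ 2 by rewrite real_normK // num_real.
move: Cp; rewrite /circle /= e => Cp.
have hsq : (n%:~R * sin (theta / 2)) ^+ 2 <= (`|p.2| * cos (theta / 2)) ^+ 2.
  rewrite !exprMn A2.
  have -> : sin (theta / 2) ^+ 2 = 1 - cos (theta / 2) ^+ 2 by lra.
  have -> : p.2 ^+ 2 = t ^+ 2 - n%:~R ^+ 2 by lra.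
  have : n%:~R ^+ 2 <= (t * cos (theta / 2)) ^+ 2 by nra.
  rewrite exprMn; nra.
have x0 : 0 <= n%:~R * sin (theta / 2) by rewrite mulr_ge0 // ltW.
have y0 : 0 <= `|p.2| * cos (theta / 2) by rewrite mulr_ge0 // ltW.
rewrite leNgt; apply/negP => hlt.
move: hsq; rewrite leNgt => /negP; apply.
nra.
Qed.

Definition angles {R : realType} (theta t : R) : set R :=
  [set phi : R | (- pi < phi <= pi) /\ J theta t (t * cos phi, t * sin phi)].

Lemma cos_le (R : realType) (x y : R) : 0 <= x <= pi -> 0 <= y <= pi ->
  x <= y -> cos y <= cos x.
Proof.
move=> hx hy xy; rewrite leNgt ltr_cos ?in_itv //= -leNgt //.
Qed.

Lemma upper_angles (R : realType) (theta t d : R) :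
  0 < theta < pi -> 0 < t -> 0 < d -> theta / 2 + d <= pi ->
  1 <= t * cos (theta / 2) ->
  1 <= t * (cos (theta / 2) - cos (theta / 2 + d)) ->
  angles theta t `<=` `]- (theta / 2 + d), theta / 2 + d[.
Proof.
move=> hth t0 d0 hd h1 h2 phi [/andP[l r] Jp].
have pi0 := @pi_gt0 R.
move: (hth) => /andP[th0 thpi].
pose N : R := (Num.floor (t * cos (theta / 2)))%:~R.
have c1 : cos (theta / 2) < 1.
  have m0 : (0 : R) \in `[0, pi] by rewrite in_itv /=; apply/andP; split; lra.
  have m1 : theta / 2 \in `[0, pi] by rewrite in_itv /=; apply/andP; split; lra.
  by rewrite -[X in _ < X](cos0 R) ltr_cos //; lra.
have Nlt : N < t.
  have := floor_le (t * cos (theta / 2)); rewrite -/N => hN.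
  have : t * cos (theta / 2) < t * 1 by rewrite ltr_pM2l.
  lra.
have := @comp_bound R _ (t, 0) N (@upper_slit R _ _ hth t0 h1) Nlt _ Jp.
rewrite /= => hc.
have NN : t * cos (theta / 2) < N + 1.
  by have := floor_itv (t * cos (theta / 2)); rewrite intrD /= => /andP[].
rewrite in_itv /= -ltr_norml ltNge; apply/negP => ha.
have : cos phi <= cos (theta / 2 + d).
  rewrite -cos_norm; apply: cos_le => //.
    by apply/andP; split; lra.
  apply/andP; split => //.
  by rewrite ler_norml; apply/andP; split; lra.
move=> hc2.
have : t * cos phi <= t * cos (theta / 2 + d) by rewrite ler_pM2l.
nra.
Qed.

Lemma leb_mono (R : realType) (A B : set R) : A `<=` B ->
  (@lebesgue_measure R A <= @lebesgue_measure R B)%E.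
Proof.
move=> AB. rewrite /lebesgue_measure /lebesgue_stieltjes_measure /measure_extension.
exact: le_mu_ext.
Qed.

Lemma leb_oo (R : realType) (a b : R) : a < b ->
  @lebesgue_measure R `]a, b[ = (b - a)%:E.
Proof. move=> ab. rewrite lebesgue_measure_itv /= lte_fin ab. by rewrite EFinB. Qed.

Lemma Theta_eq (R : realType) (theta t : R) : 0 < t ->
  Theta theta t = lebesgue_measure (angles theta t).
Proof.
move=> t0; rewrite /Theta /arc_length -/(angles theta t).
by rewrite muleA -EFinM mulVf ?gt_eqF // mul1e.
Qed.

Lemma ev_bounds (R : realType) (theta d : R) : 0 < theta < pi ->
  0 < d -> theta / 2 + d <= pi ->
  \forall t \near +oo%R, exists2 r : R, Theta theta t = r%:E &
     theta <= r <= theta + 2 * d.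
Proof.
move=> hth d0 hd.
have pi0 := @pi_gt0 R.
move: (hth) => /andP[th0 thpi].
set c := cos (theta / 2).
have cpos : 0 < c by apply: cos_gt0_pihalf; apply/andP; split; lra.
have Kpos : 0 < c - cos (theta / 2 + d).
  have m0 : theta / 2 + d \in `[0, pi] by rewrite in_itv /=; apply/andP; split; lra.
  have m1 : theta / 2 \in `[0, pi] by rewrite in_itv /=; apply/andP; split; lra.
  by rewrite subr_gt0 /c ltr_cos //; lra.
set K := c - cos (theta / 2 + d) in Kpos.
exists (Num.max (c^-1) (K^-1)); split; first exact: num_real.
move=> t; rewrite gt_max => /andP[tc tK].
have t0 : 0 < t by apply: lt_trans tc; rewrite invr_gt0.
have h1 : 1 <= t * c.
  by rewrite -ler_pdivrMr // mul1r ltW.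
have h2 : 1 <= t * K.
  by rewrite -ler_pdivrMr // mul1r ltW.
have low : `]- (theta / 2), theta / 2[ `<=` angles theta t.
  move=> phi; rewrite /= in_itv /= => hphi; split.
    by move: hphi => /andP[a b]; apply/andP; split; lra.
  apply: (@arc_in_J R theta t (theta / 2)) => //; first lra.
  by move=> psi hpsi; apply: lower_slit.
have up := @upper_angles R theta t d hth t0 d0 hd h1 h2.
have L1 := @leb_mono R _ _ low.
have L2 := @leb_mono R _ _ up.
rewrite leb_oo in L1; last lra.
rewrite leb_oo in L2; last lra.
rewrite Theta_eq //.
move: L1 L2; case: (lebesgue_measure (angles theta t)) => [r| |] //= L1 L2.
exists r => //.
rewrite !lee_fin in L1 L2.
apply/andP; split; lra.
Qed.

Theorem lemma3p2 (R : realType) (theta : R) (htheta : 0 < theta < pi) :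
  Theta theta t @[t --> +oo%R] --> (theta%:E)%E.
Proof.
have pi0 := @pi_gt0 R.
move: (htheta) => /andP[th0 thpi].
apply/fine_cvgP; split.
  have d0 : 0 < (pi - theta) / 2 by lra.
  have hd : theta / 2 + (pi - theta) / 2 <= pi by lra.
  apply: filterS (@ev_bounds R theta _ htheta d0 hd).
  by move=> t [r -> _].
apply/cvgrPdist_le => eps eps0.
pose d := Num.min (eps / 2) ((pi - theta) / 2).
have d0 : 0 < d by rewrite lt_min; apply/andP; split; lra.
have dle1 : d <= eps / 2 by rewrite ge_min lexx.
have dle2 : d <= (pi - theta) / 2 by rewrite ge_min lexx orbT.
have hd : theta / 2 + d <= pi by lra.
apply: filterS (@ev_bounds R theta _ htheta d0 hd).
move=> t [r e /andP[a b]]; rewrite /= e /=.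
rewrite ler_norml; apply/andP; split; lra.
Qed.
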